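(* Let $r\ge2$. In the ring $\mathcal{T}_2(B_r)$ the following hold for all generators $T^{(a)}_m(u)$: (1) $T^{(a)}_m(u+2r+1)=T^{(a)}_{2t_a-m}(u)$; (2) $T^{(a)}_m(u+2(2r+1))=T^{(a)}_m(u)$.
   Context: $t_a=1$ for $1\le a\le r-1$ and $t_r=2$. $\mathcal{T}_2(B_r)$ (level 2 restricted T-algebra of type $B_r$, with $\alpha_r$ the short root) is the commutative ring with generators $T^{(a)}_1(u)^{\pm1}$ ($1\le a\le r-1$) and $T^{(r)}_m(u)^{\pm1}$ ($m=1,2,3$), $u\in\frac12\mathbb{Z}$, and relations, for all $u\in\frac12\mathbb{Z}$: $T^{(a)}_1(u-1)T^{(a)}_1(u+1)=1+T^{(a-1)}_1(u)T^{(a+1)}_1(u)$ ($1\le a\le r-2$); $T^{(r-1)}_1(u-1)T^{(r-1)}_1(u+1)=1+T^{(r-2)}_1(u)T^{(r)}_2(u)$; $T^{(r)}_1(u-\frac12)T^{(r)}_1(u+\frac12)=T^{(r)}_2(u)+T^{(r-1)}_1(u)$; $T^{(r)}_2(u-\frac12)T^{(r)}_2(u+\frac12)=T^{(r)}_1(u)T^{(r)}_3(u)+T^{(r-1)}_1(u-\frac12)T^{(r-1)}_1(u+\frac12)$; $T^{(r)}_3(u-\frac12)T^{(r)}_3(u+\frac12)=T^{(r)}_2(u)+T^{(r-1)}_1(u)$; where $T^{(0)}_1=1$. *)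

(* Defs.v *)
From HB Require Import structures.
From mathcomp Require Import all_boot all_order all_algebra.
Set Implicit Arguments. Unset Strict Implicit. Unset Printing Implicit Defensive.
Import Order.TTheory GRing.Theory Num.Theory.
Local Open Scope ring_scope.

(* Spectral parameter u in (1/2)Z is encoded by the integer k with u = k/2.
   A family T : nat -> nat -> int -> R encodes T^{(a)}_m(k/2).               *)

Definition tB (r a : nat) : nat := if a == r then 2%N else 1%N.

Definition Tz (R : comPzRingType) (T : nat -> nat -> int -> R) (a : nat) (k : int) : R :=
  if a == 0%N then 1 else T a 1%N k.

Definition is_gen (r a m : nat) : bool :=
  ((1 <= a <= r.-1)%N && (m == 1%N)) || ((a == r) && (1 <= m <= 3)%N).

Definition invertible (R : comPzRingType) (x : R) : Prop := exists y : R, x * y = 1.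

Definition TsysB2 (R : comPzRingType) (r : nat) (T : nat -> nat -> int -> R) : Prop :=
     (forall a m k, is_gen r a m -> invertible (T a m k)) /\
      (forall a k, (1 <= a <= r - 2)%N ->
         T a 1%N (k - 2) * T a 1%N (k + 2) = 1 + Tz T a.-1 k * T a.+1 1%N k) /\
      (forall k, T r.-1 1%N (k - 2) * T r.-1 1%N (k + 2) = 1 + Tz T (r - 2) k * T r 2%N k) /\
      (forall k, T r 1%N (k - 1) * T r 1%N (k + 1) = T r 2%N k + T r.-1 1%N k) /\
      (forall k, T r 2%N (k - 1) * T r 2%N (k + 1)
                 = T r 1%N k * T r 3%N k + T r.-1 1%N (k - 1) * T r.-1 1%N (k + 1)) /\
      (forall k, T r 3%N (k - 1) * T r 3%N (k + 1) = T r 2%N k + T r.-1 1%N k).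

(* Main.v *)
Require Import Defs.
From HB Require Import structures.
From mathcomp Require Import all_boot all_order all_algebra.
From mathcomp Require Import ring lra zify.
Import Order.TTheory GRing.Theory Num.Theory.
Local Open Scope ring_scope.
Section Vec.
Variable R : comPzRingType.
Definition D (u v : R * R) : R := u.1 * v.2 - u.2 * v.1.
Lemma plucker (a b c e : R * R) : D a c * D b e = D a b * D c e + D a e * D b c.
Proof. rewrite /D; ring. Qed.
End Vec.
Arguments D {R}.
Arguments plucker {R}.

Lemma negz_succ (n : nat) : Negz n.+1 + 1 = Negz n.
Proof. rewrite !NegzE. lia. Qed.
Lemma parity (n : int) : exists i, n = i * 2 \/ n = i * 2 + 1.
Proof.
exists (n %/ 2)%Z. have := divz_eq n 2. have h0 := modz_ge0 n (isT : (2:int) != 0).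
have h1 := ltz_pmod n (isT : (0:int) < 2). lia.
Qed.
Lemma div2_even i : ((i * 2) %/ 2)%Z = i.
Proof. by rewrite mulzK. Qed.
Lemma mod2_even i : ((i * 2) %% 2)%Z = 0.
Proof. by rewrite modzMl. Qed.
Lemma div2_odd i : ((i * 2 + 1) %/ 2)%Z = i.
Proof. rewrite divzMDl // divz_small ?addr0 //. Qed.
Lemma mod2_odd i : ((i * 2 + 1) %% 2)%Z = 1.
Proof. have := divz_eq (i*2+1) 2. rewrite div2_odd. lia. Qed.

Section Reduced.
Variables (R : comPzRingType) (r : nat) (X : nat -> int -> R) (Z W : int -> R).
Hypothesis hr : (2 <= r)%N.
Hypothesis HX0 : forall t, X 0 t = 1.
Hypothesis HXinv : forall a t, (1 <= a <= r)%N -> exists y, X a t * y = 1.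
Hypothesis HZinv : forall t, exists y, Z t * y = 1.
Hypothesis HWinv : forall t, exists y, W t * y = 1.
Hypothesis H1 : forall a t, (1 <= a <= r.-1)%N ->
  X a (t - 1) * X a (t + 1) = 1 + X a.-1 t * X a.+1 t.
Hypothesis H2 : forall t, Z (t - 1) * Z t = X r t + X r.-1 t.
Hypothesis H2w : forall t, W (t - 1) * W t = X r t + X r.-1 t.
Hypothesis H3 : forall t, X r t * X r (t + 1) = Z t * W t + X r.-1 t * X r.-1 (t + 1).

Definition tau (j : nat) : int :=
  if (j <= r)%N then (2 * j)%N%:Z else (2 * j)%N%:Z - (2 * r + 1)%N%:Z.
Definition cq (j : nat) : R := X 1 (tau j).
Fixpoint Spair (n : nat) : (R * R) * (R * R) :=
  match n with
  | 0 => ((1, 0), (0, 1))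
  | n'.+1 => let p := Spair n' in
      (p.2, (cq n * p.2.1 - p.1.1, cq n * p.2.2 - p.1.2))
  end.
Definition Sv n := (Spair n).1.

Lemma S_rec n : Sv n.+2 = (cq n.+1 * (Sv n.+1).1 - (Sv n).1, cq n.+1 * (Sv n.+1).2 - (Sv n).2).
Proof. by []. Qed.
Lemma DS1 n : D (Sv n) (Sv n.+1) = 1.
Proof.
elim: n => [|n IH]; first by rewrite /Sv /D /=; ring.
rewrite S_rec; rewrite /D /= in IH *; rewrite -[RHS]IH; ring.
Qed.
Lemma DS2 n : D (Sv n) (Sv n.+2) = cq n.+1.
Proof.
have := DS1 n. rewrite S_rec /D /= => h.
transitivity (cq n.+1 * ((Sv n).1 * (Sv n.+1).2 - (Sv n).2 * (Sv n.+1).1)); first ring.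
by rewrite h mulr1.
Qed.

Definition sig (n : int) : int :=
  if (n %% 2 == 0)%Z then (n %/ 2)%Z else (n %/ 2)%Z + (r.+1)%:Z.
Lemma sig_even i : sig (i * 2) = i.
Proof. by rewrite /sig mod2_even div2_even. Qed.
Lemma sig_odd i : sig (i * 2 + 1) = i + (r.+1)%:Z.
Proof. by rewrite /sig mod2_odd div2_odd. Qed.
Lemma sig_add2 n : sig (n + 2) = sig n + 1.
Proof.
have [i [->|->]] := parity n.
- have -> : i * 2 + 2 = (i + 1) * 2 by lia. rewrite !sig_even. by [].
- have -> : i * 2 + 1 + 2 = (i + 1) * 2 + 1 by lia. rewrite !sig_odd. lia.
Qed.
Lemma sig_range n : -1 <= n <= (2 * r + 2)%N%:Z -> 0 <= sig n <= (2 * r + 1)%N%:Z.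
Proof. have [i [->|->]] := parity n; [rewrite sig_even|rewrite sig_odd]; lia. Qed.

Definition SV (n : int) := Sv (absz (sig n)).

Lemma SV1 n : -1 <= n <= (2 * r)%N%:Z -> D (SV n) (SV (n + 2)) = 1.
Proof.
move=> hn. have := sig_range n. rewrite /SV sig_add2 => h.
have -> : absz (sig n + 1) = (absz (sig n)).+1 by lia.
exact: DS1.
Qed.

Lemma tau_sig t : 1 <= t <= (2 * r)%N%:Z -> tau (absz (sig t)) = t.
Proof.
rewrite /tau. have [i [->|->]] := parity t; [rewrite sig_even|rewrite sig_odd] => h.
- case: leqP => hh; lia.
- case: leqP => hh; lia.
Qed.

Lemma SV2 t : 1 <= t <= (2 * r)%N%:Z -> D (SV (t - 2)) (SV (t + 2)) = X 1 t.
Proof.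
move=> ht. have h := sig_range (t - 2).
have e1 : sig (t + 2) = sig (t - 2) + 2.
  have := sig_add2 (t - 2). have := sig_add2 (t - 2 + 2).
  have -> : t - 2 + 2 + 2 = t + 2 by lia. have -> : t - 2 + 2 = t by lia. lia.
have e2 : sig t = sig (t - 2) + 1.
  have := sig_add2 (t - 2). by have -> : t - 2 + 2 = t by lia.
rewrite /SV e1.
have -> : absz (sig (t - 2) + 2) = (absz (sig (t - 2))).+2 by lia.
rewrite DS2 /cq. have -> : (absz (sig (t - 2))).+1 = absz (sig t) by lia.
by rewrite tau_sig.
Qed.

Lemma cancelR (x y z : R) : (exists w, x * w = 1) -> y * x = z * x -> y = z.
Proof. move=> [w hw] h. by rewrite -[y]mulr1 -[z]mulr1 -hw !mulrA h. Qed.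

Lemma SV1' n m : m = n + 2 -> -1 <= n <= (2 * r)%N%:Z -> D (SV n) (SV m) = 1.
Proof. move=> ->; exact: SV1. Qed.
Lemma SV2' n m t : n = t - 2 -> m = t + 2 -> 1 <= t <= (2 * r)%N%:Z ->
  D (SV n) (SV m) = X 1 t.
Proof. move=> -> ->; exact: SV2. Qed.

Definition Tri (a : nat) := (a <= r)%N -> forall n m t : int,
  m = n + (2 * a + 2)%N%:Z -> t = n + a%:Z + 1 -> -1 <= n ->
  m <= (2 * r + 2)%N%:Z -> D (SV n) (SV m) = X a t.

Lemma Tri_all a : Tri a /\ Tri a.+1.
Proof.
elim: a => [|a [IH1 IH2]].
  split=> ha n m t hm ht hn hm2.
  - rewrite HX0; apply: SV1'; lia.
  - apply: SV2'; lia.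
split=> // ha n m t hm ht hn hm2.
have hpl := plucker (SV n) (SV (n + 2)) (SV (n + (2 * a + 4)%N%:Z)) (SV m).
rewrite (SV1' n (n + 2)) ?mul1r in hpl; try lia.
rewrite (SV1' (n + (2 * a + 4)%N%:Z) m) ?mul1r in hpl; try lia.
rewrite (IH2 _ n (n + (2 * a + 4)%N%:Z) (t - 1)) in hpl; try lia.
rewrite (IH2 _ (n + 2) m (t + 1)) in hpl; try lia.
rewrite (IH1 _ (n + 2) (n + (2 * a + 4)%N%:Z) t) in hpl; try lia.
have h1 := H1 a.+1 t. rewrite /= in h1.
rewrite h1 in hpl; last lia.
have hh : D (SV n) (SV m) * X a t = X a.+2 t * X a t.
  move/addrI: hpl => <-. by rewrite mulrC.
case: a IH1 IH2 h1 ha hm ht hn hm2 hh hpl => [|a] IH1 IH2 h1 ha hm ht hn hm2 hh hpl.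
  by rewrite HX0 !mulr1 in hh.
apply: (cancelR (X a.+1 t)) => //. apply: HXinv. lia.
Qed.

Lemma Tri_at a n m t : (a <= r)%N -> m = n + (2 * a + 2)%N%:Z -> t = n + a%:Z + 1 ->
  -1 <= n -> m <= (2 * r + 2)%N%:Z -> D (SV n) (SV m) = X a t.
Proof. move=> ha; exact: (proj1 (Tri_all a) ha). Qed.

Lemma SV_eq n (j : nat) : sig n = j%:Z -> SV n = Sv j.
Proof. by rewrite /SV => ->. Qed.
Lemma sig_e n i : n = i * 2 -> sig n = i.
Proof. by move=> ->; rewrite sig_even. Qed.
Lemma sig_o n i : n = i * 2 + 1 -> sig n = i + r.+1%:Z.
Proof. by move=> ->; rewrite sig_odd. Qed.

Definition dd : int := (2 * r + 1)%N%:Z.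

Lemma Qeq : D (Sv 0) (Sv (2 * r + 1)) = Z r%:Z * W r%:Z.
Proof.
have sm1 : sig (-1) = r%:Z by rewrite (sig_o _ (-1)); lia.
have s0 : sig 0 = 0%N%:Z by rewrite (sig_e _ 0); lia.
have s1 : sig 1 = r.+1%:Z by rewrite (sig_o _ 0); lia.
have s2r : sig (2 * r)%N%:Z = r%:Z by rewrite (sig_e _ r%:Z); lia.
have s2r1 : sig (2 * r + 1)%N%:Z = (2 * r + 1)%N%:Z by rewrite (sig_o _ r%:Z); lia.
have s2r2 : sig (2 * r + 2)%N%:Z = r.+1%:Z by rewrite (sig_e _ r.+1%:Z); lia.
have e1 : X r r%:Z = D (Sv r) (Sv (2 * r + 1)).
  rewrite -(Tri_at r (-1) (2 * r + 1)%N%:Z) //; try lia.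
  by rewrite (SV_eq _ _ sm1) (SV_eq _ _ s2r1).
have e2 : X r (r%:Z + 1) = D (Sv 0) (Sv r.+1).
  rewrite -(Tri_at r 0 (2 * r + 2)%N%:Z) //; try lia.
  by rewrite (SV_eq _ _ s0) (SV_eq _ _ s2r2).
have e3 : X r.-1 r%:Z = D (Sv 0) (Sv r).
  rewrite -(Tri_at r.-1 0 (2 * r)%N%:Z) //; try lia.
  by rewrite (SV_eq _ _ s0) (SV_eq _ _ s2r).
have e4 : X r.-1 (r%:Z + 1) = D (Sv r.+1) (Sv (2 * r + 1)).
  rewrite -(Tri_at r.-1 1 (2 * r + 1)%N%:Z) //; try lia.
  by rewrite (SV_eq _ _ s1) (SV_eq _ _ s2r1).
have hp := plucker (Sv 0) (Sv r) (Sv r.+1) (Sv (2 * r + 1)).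
rewrite DS1 mulr1 in hp.
have h3 := H3 r%:Z. rewrite e1 e2 e3 e4 in h3.
have -> : D (Sv 0) (Sv (2 * r + 1)) =
  D (Sv 0) (Sv r.+1) * D (Sv r) (Sv (2 * r + 1)) - D (Sv 0) (Sv r) * D (Sv r.+1) (Sv (2 * r + 1)).
  rewrite hp. ring.
rewrite mulrC h3. ring.
Qed.

Variables (iZ iW : R).
Hypothesis hiZ : Z r%:Z * iZ = 1.
Hypothesis hiW : W r%:Z * iW = 1.

Definition Qv := D (Sv 0) (Sv (2 * r + 1)).
Definition iQ := iZ * iW.
Lemma QiQ : Qv * iQ = 1.
Proof.
rewrite /Qv Qeq /iQ.
have -> : Z r%:Z * W r%:Z * (iZ * iW) = (Z r%:Z * iZ) * (W r%:Z * iW) by ring.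
by rewrite hiZ hiW mulr1.
Qed.

Definition gam : R * R := ((Sv 0).1 - (Sv (2 * r + 1)).1, (Sv 0).2 - (Sv (2 * r + 1)).2).
Definition M (v : R * R) : R * R :=
  (v.1 - D gam v * iQ * gam.1, v.2 - D gam v * iQ * gam.2).
Definition Minv (v : R * R) : R * R :=
  (v.1 + D gam v * iQ * gam.1, v.2 + D gam v * iQ * gam.2).

Lemma DgM v : D gam (M v) = D gam v.
Proof. rewrite /M; case: gam v => [g1 g2] [x y]; rewrite /D /=; ring. Qed.
Lemma DgMi v : D gam (Minv v) = D gam v.
Proof. rewrite /Minv; case: gam v => [g1 g2] [x y]; rewrite /D /=; ring. Qed.
Lemma MMi v : M (Minv v) = v.
Proof. rewrite {1}/M DgMi /Minv; case: gam v => [g1 g2] [x y] /=; congr pair; ring. Qed.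
Lemma MiM v : Minv (M v) = v.
Proof. rewrite {1}/Minv DgM /M; case: gam v => [g1 g2] [x y] /=; congr pair; ring. Qed.
Lemma DMM a b : D (M a) (M b) = D a b.
Proof. rewrite /M; case: gam a b => [g1 g2] [x y] [z w]; rewrite /D /=; ring. Qed.
Lemma DMiMi a b : D (Minv a) (Minv b) = D a b.
Proof. rewrite /Minv; case: gam a b => [g1 g2] [x y] [z w]; rewrite /D /=; ring. Qed.
Lemma DaM a b : D a (M b) = D a b + D gam a * D gam b * iQ.
Proof. rewrite /M; case: gam a b => [g1 g2] [x y] [z w]; rewrite /D /=; ring. Qed.
Lemma MS0 : M (Sv 0) = Sv (2 * r + 1).
Proof.
have := QiQ. rewrite /M /gam /Qv. case: (Sv 0) (Sv (2 * r + 1)) => [a b] [x y] /= hq.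
congr pair.
- transitivity (a - (D (a, b) (x, y) * iQ) * (a - x)); first by rewrite /D /=; ring.
  rewrite hq; ring.
- transitivity (b - (D (a, b) (x, y) * iQ) * (b - y)); first by rewrite /D /=; ring.
  rewrite hq; ring.
Qed.

Definition Mp (k : int) (v : R * R) : R * R :=
  match k with Posz n => iter n M v | Negz n => iter n.+1 Minv v end.

Lemma Mp0 v : Mp 0 v = v.
Proof. by []. Qed.
Lemma Mp_succ k v : Mp (k + 1) v = M (Mp k v).
Proof.
case: k => n.
- have -> : (Posz n + 1 = Posz n.+1) by rewrite -addn1.
  by [].
- case: n => [|n].
  + have -> : Negz 0 + 1 = 0 by []. by rewrite Mp0 /= MMi.
  + by rewrite negz_succ /= MMi.
Qed.
Lemma Mp_comm k v : M (Mp k v) = Mp k (M v).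
Proof.
case: k => n /=.
- by rewrite -iterS iterSr.
- by rewrite MMi -iterS iterSr MiM.
Qed.
Lemma DMp k a b : D (Mp k a) (Mp k b) = D a b.
Proof.
case: k => n /=.
- elim: n => [|n IH] //=. by rewrite DMM.
- elim: n => [|n IH] /=; first by rewrite DMiMi.
  by rewrite DMiMi.
Qed.
Lemma DgMp k v : D gam (Mp k v) = D gam v.
Proof.
case: k => n /=.
- elim: n => [|n IH] //=. by rewrite DgM.
- elim: n => [|n IH] /=; first by rewrite DgMi.
  by rewrite DgMi.
Qed.

Lemma dd_pos : 0 < dd.
Proof. rewrite /dd; lia. Qed.
Lemma dd_neq0 : dd != 0.
Proof. rewrite /dd; lia. Qed.

Definition Uh (j : int) : R * R := Mp (j %/ dd)%Z (Sv (absz (j %% dd)%Z)).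

Lemma Uh_char q s : 0 <= s < dd -> Uh (q * dd + s) = Mp q (Sv (absz s)).
Proof.
move=> hs. rewrite /Uh divzMDl ?dd_neq0 // divz_small ?addr0; last first.
  rewrite /dd in hs *; lia.
have := divz_eq (q * dd + s) dd. rewrite divzMDl ?dd_neq0 // divz_small ?addr0; last first.
  rewrite /dd in hs *; lia.
move=> h. have -> : ((q * dd + s) %% dd)%Z = s by lia.
by [].
Qed.
Lemma Uh_dec j : exists q s, 0 <= s < dd /\ j = q * dd + s.
Proof.
exists (j %/ dd)%Z, (j %% dd)%Z. split; last exact: divz_eq.
have := modz_ge0 j dd_neq0. have := ltz_pmod j dd_pos. lia.
Qed.
Lemma Uh_shift j : Uh (j + dd) = M (Uh j).
Proof.
have [q [s [hs ->]]] := Uh_dec j.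
have -> : q * dd + s + dd = (q + 1) * dd + s by ring.
by rewrite !Uh_char // Mp_succ.
Qed.
Lemma Uh_S (j : nat) : (j <= 2 * r + 1)%N -> Uh j%:Z = Sv j.
Proof.
move=> hj. case: (ltnP j (2 * r + 1)) => hj2.
  have -> : j%:Z = 0 * dd + j%:Z by ring.
  rewrite Uh_char; last (rewrite /dd; lia). by rewrite Mp0.
have -> : j = (2 * r + 1)%N by lia.
have -> : (2 * r + 1)%N%:Z = 0 + dd by rewrite /dd add0r.
rewrite Uh_shift -MS0. congr M.
have h := @Uh_char 0 0. rewrite mul0r addr0 Mp0 in h. apply: h. rewrite /dd; lia.
Qed.
Lemma Uh_D1 j : D (Uh j) (Uh (j + 1)) = 1.
Proof.
have [q [s [hs ->]]] := Uh_dec j.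
case: (ltP (s + 1) dd) => hs1.
  have -> : q * dd + s + 1 = q * dd + (s + 1) by ring.
  rewrite !Uh_char ?DMp; try lia.
  have -> : absz (s + 1) = (absz s).+1 by lia.
  exact: DS1.
have -> : q * dd + s + 1 = (q + 1) * dd + 0 by rewrite /dd in hs hs1 *; lia.
rewrite !Uh_char //; try (rewrite /dd; lia).
rewrite Mp_succ Mp_comm DMp /= MS0.
have -> : (2 * r + 1 = (absz s).+1)%N by rewrite /dd in hs hs1 *; lia.
exact: DS1.
Qed.

Definition Vp (n : int) : R * R := Uh (sig n).

Lemma Vp_D1 n : D (Vp n) (Vp (n + 2)) = 1.
Proof. by rewrite /Vp sig_add2 Uh_D1. Qed.
Lemma Vp_D1' n m : m = n + 2 -> D (Vp n) (Vp m) = 1.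
Proof. move=> ->; exact: Vp_D1. Qed.

Lemma Vp_shift_e i : Vp (i * 2 + dd) = M (Vp (i * 2)).
Proof.
rewrite /Vp sig_even (sig_o _ (i + r%:Z)); last by rewrite /dd; lia.
rewrite -Uh_shift. congr Uh. rewrite /dd; lia.
Qed.
Lemma Vp_shift_o i : Vp (i * 2 + 1 + dd) = Vp (i * 2 + 1).
Proof.
rewrite /Vp sig_odd (sig_e _ (i + r.+1%:Z)) //. rewrite /dd; lia.
Qed.
Lemma Vp_SV n : -1 <= n <= (2 * r + 2)%N%:Z -> Vp n = SV n.
Proof.
move=> hn. have h := sig_range n hn. rewrite /Vp /SV.
have -> : sig n = (absz (sig n))%:Z by lia.
rewrite Uh_S; last by lia.
by have -> : absz (absz (sig n))%:Z = absz (sig n) by [].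
Qed.

Definition Xm (a : nat) (t : int) : R := D (Vp (t - a%:Z - 1)) (Vp (t + a%:Z + 1)).
Definition gv (n : int) : R := D gam (Vp n).
Definition ev (n : int) : bool := ((n %% 2)%Z == 0).
Definition Zm (t : int) : R := gv (t - r%:Z) * (if ev (t - r%:Z) then iW else iZ).
Definition Wm (t : int) : R := gv (t - r%:Z) * (if ev (t - r%:Z) then iZ else iW).

Lemma ev_e i : ev (i * 2) = true.
Proof. by rewrite /ev mod2_even. Qed.
Lemma ev_o i : ev (i * 2 + 1) = false.
Proof. by rewrite /ev mod2_odd. Qed.
Lemma DVe n1 n2 m1 m2 : n1 = n2 -> m1 = m2 -> D (Vp n1) (Vp m1) = D (Vp n2) (Vp m2).
Proof. by move=> -> ->. Qed.

Lemma idE1 a b c : D a b * D b (M c) - D b (M a) * D c b = D gam b * D gam b * iQ * D a c.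
Proof. rewrite !DaM. case: gam a b c => [g1 g2] [x1 y1] [x2 y2] [x3 y3]; rewrite /D /=; ring. Qed.
Lemma idE2 a b c : D a (M b) * D b c - D b a * D c (M b) = D gam b * D gam b * iQ * D a c.
Proof. rewrite !DaM. case: gam a b c => [g1 g2] [x1 y1] [x2 y2] [x3 y3]; rewrite /D /=; ring. Qed.
Lemma idS1 a b : D a b + D b (M a) = D gam a * D gam b * iQ.
Proof. rewrite !DaM. case: gam a b => [g1 g2] [x1 y1] [x2 y2]; rewrite /D /=; ring. Qed.
Lemma idS2 a b : D a (M b) + D b a = D gam a * D gam b * iQ.
Proof. rewrite !DaM. case: gam a b => [g1 g2] [x1 y1] [x2 y2]; rewrite /D /=; ring. Qed.

Lemma MR0 t : Xm 0 t = 1.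
Proof. rewrite /Xm; apply: Vp_D1'; lia. Qed.

Lemma MR1 a t : (1 <= a)%N -> Xm a (t - 1) * Xm a (t + 1) = 1 + Xm a.-1 t * Xm a.+1 t.
Proof.
move=> ha.
have hp := plucker (Vp (t - a%:Z - 2)) (Vp (t - a%:Z)) (Vp (t + a%:Z)) (Vp (t + a%:Z + 2)).
rewrite (Vp_D1' (t - a%:Z - 2) (t - a%:Z)) ?mul1r in hp; last lia.
rewrite (Vp_D1' (t + a%:Z) (t + a%:Z + 2)) ?mul1r in hp; last lia.
have -> : Xm a (t - 1) = D (Vp (t - a%:Z - 2)) (Vp (t + a%:Z)) by rewrite /Xm; apply: DVe; lia.
have -> : Xm a (t + 1) = D (Vp (t - a%:Z)) (Vp (t + a%:Z + 2)) by rewrite /Xm; apply: DVe; lia.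
have -> : Xm a.-1 t = D (Vp (t - a%:Z)) (Vp (t + a%:Z)) by rewrite /Xm; apply: DVe; lia.
have -> : Xm a.+1 t = D (Vp (t - a%:Z - 2)) (Vp (t + a%:Z + 2)) by rewrite /Xm; apply: DVe; lia.
by rewrite hp mulrC.
Qed.

Lemma MR2 t : Zm (t - 1) * Zm t = Xm r t + Xm r.-1 t.
Proof.
have [i [hi|hi]] := parity (t - r%:Z - 1).
- have -> : Xm r t = D (Vp (i * 2)) (Vp ((i * 2 + 1) + dd)) by rewrite /Xm; apply: DVe; rewrite /dd; lia.
  have -> : Xm r.-1 t = D (Vp (i * 2 + 1)) (Vp (i * 2 + dd)) by rewrite /Xm; apply: DVe; rewrite /dd; lia.
  rewrite Vp_shift_o Vp_shift_e idS1.
  have e1 : t - 1 - r%:Z = i * 2 by lia.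
  have e2 : t - r%:Z = i * 2 + 1 by lia.
  rewrite /Zm e1 e2 ev_e ev_o /gv /iQ. ring.
- have -> : Xm r t = D (Vp (i * 2 + 1)) (Vp ((i + 1) * 2 + dd)) by rewrite /Xm; apply: DVe; rewrite /dd; lia.
  have -> : Xm r.-1 t = D (Vp ((i + 1) * 2)) (Vp (i * 2 + 1 + dd)) by rewrite /Xm; apply: DVe; rewrite /dd; lia.
  rewrite Vp_shift_o Vp_shift_e idS2.
  have e1 : t - 1 - r%:Z = i * 2 + 1 by lia.
  have e2 : t - r%:Z = (i + 1) * 2 by lia.
  rewrite /Zm e1 e2 ev_e ev_o /gv /iQ. ring.
Qed.

Lemma MR2w t : Wm (t - 1) * Wm t = Xm r t + Xm r.-1 t.
Proof.
rewrite -MR2 /Zm /Wm.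
have -> : t - 1 - r%:Z = (t - r%:Z) - 1 by lia.
have [i [->|->]] := parity (t - r%:Z).
- have -> : i * 2 - 1 = (i - 1) * 2 + 1 by lia. rewrite ev_e ev_o. ring.
- have -> : i * 2 + 1 - 1 = i * 2 by lia. rewrite ev_e ev_o. ring.
Qed.

Lemma MR3 t : Xm r t * Xm r (t + 1) = Zm t * Wm t + Xm r.-1 t * Xm r.-1 (t + 1).
Proof.
have [i [hi|hi]] := parity (t - r%:Z - 1).
- have -> : Xm r t = D (Vp (i * 2)) (Vp ((i * 2 + 1) + dd)) by rewrite /Xm; apply: DVe; rewrite /dd; lia.
  have -> : Xm r (t + 1) = D (Vp (i * 2 + 1)) (Vp ((i + 1) * 2 + dd)) by rewrite /Xm; apply: DVe; rewrite /dd; lia.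
  have -> : Xm r.-1 t = D (Vp (i * 2 + 1)) (Vp (i * 2 + dd)) by rewrite /Xm; apply: DVe; rewrite /dd; lia.
  have -> : Xm r.-1 (t + 1) = D (Vp ((i + 1) * 2)) (Vp (i * 2 + 1 + dd)) by rewrite /Xm; apply: DVe; rewrite /dd; lia.
  rewrite !Vp_shift_o !Vp_shift_e.
  have h := idE1 (Vp (i * 2)) (Vp (i * 2 + 1)) (Vp ((i + 1) * 2)).
  rewrite (Vp_D1' (i * 2) ((i + 1) * 2)) ?mulr1 in h; last lia.
  have e2 : t - r%:Z = i * 2 + 1 by lia.
  rewrite /Zm /Wm e2 ev_o /gv /iQ.
  apply/eqP; rewrite -subr_eq h; apply/eqP; rewrite /iQ; ring.
- have -> : Xm r t = D (Vp (i * 2 + 1)) (Vp ((i + 1) * 2 + dd)) by rewrite /Xm; apply: DVe; rewrite /dd; lia.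
  have -> : Xm r (t + 1) = D (Vp ((i + 1) * 2)) (Vp ((i + 1) * 2 + 1 + dd)) by rewrite /Xm; apply: DVe; rewrite /dd; lia.
  have -> : Xm r.-1 t = D (Vp ((i + 1) * 2)) (Vp (i * 2 + 1 + dd)) by rewrite /Xm; apply: DVe; rewrite /dd; lia.
  have -> : Xm r.-1 (t + 1) = D (Vp ((i + 1) * 2 + 1)) (Vp ((i + 1) * 2 + dd)) by rewrite /Xm; apply: DVe; rewrite /dd; lia.
  rewrite !Vp_shift_o !Vp_shift_e.
  have h := idE2 (Vp (i * 2 + 1)) (Vp ((i + 1) * 2)) (Vp ((i + 1) * 2 + 1)).
  rewrite (Vp_D1' (i * 2 + 1) ((i + 1) * 2 + 1)) ?mulr1 in h; last lia.
  have e2 : t - r%:Z = (i + 1) * 2 by lia.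
  rewrite /Zm /Wm e2 ev_e /gv /iQ.
  apply/eqP; rewrite -subr_eq h; apply/eqP; rewrite /iQ; ring.
Qed.

Lemma MPX a t : Xm a (t + dd) = Xm a t.
Proof.
have [i [hi|hi]] := parity (t - a%:Z - 1).
- have -> : Xm a (t + dd) = D (Vp (i * 2 + dd)) (Vp ((i + a%:Z + 1) * 2 + dd))
    by rewrite /Xm; apply: DVe; lia.
  have -> : Xm a t = D (Vp (i * 2)) (Vp ((i + a%:Z + 1) * 2)) by rewrite /Xm; apply: DVe; lia.
  by rewrite !Vp_shift_e DMM.
- have -> : Xm a (t + dd) = D (Vp (i * 2 + 1 + dd)) (Vp ((i + a%:Z + 1) * 2 + 1 + dd))
    by rewrite /Xm; apply: DVe; lia.
  have -> : Xm a t = D (Vp (i * 2 + 1)) (Vp ((i + a%:Z + 1) * 2 + 1)) by rewrite /Xm; apply: DVe; lia.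
  by rewrite !Vp_shift_o.
Qed.

Lemma MPZW t : Zm (t + dd) = Wm t /\ Wm (t + dd) = Zm t.
Proof.
rewrite /Zm /Wm /gv.
have -> : t + dd - r%:Z = (t - r%:Z) + dd by ring.
have [i [->|->]] := parity (t - r%:Z).
- rewrite Vp_shift_e DgM.
  have -> : i * 2 + dd = (i + r%:Z) * 2 + 1 by rewrite /dd; lia.
  by rewrite ev_e ev_o.
- rewrite Vp_shift_o.
  have -> : i * 2 + 1 + dd = (i + r%:Z + 1) * 2 by rewrite /dd; lia.
  by rewrite ev_e ev_o.
Qed.

Lemma match_X a : (a <= r)%N -> X a r%:Z = Xm a r%:Z /\ X a (r%:Z + 1) = Xm a (r%:Z + 1).
Proof.
move=> ha. rewrite /Xm !Vp_SV; try lia.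
split; symmetry; apply: Tri_at => //; lia.
Qed.

Lemma gv0 : gv 0 = Z r%:Z * W r%:Z.
Proof.
rewrite /gv Vp_SV; last lia.
rewrite (SV_eq _ 0); last by rewrite (sig_e _ 0).
rewrite -Qeq /Qv /gam. case: (Sv 0) (Sv (2 * r + 1)) => [x1 y1] [x2 y2]. rewrite /D /=; ring.
Qed.

Lemma match_Z : Z r%:Z = Zm r%:Z /\ W r%:Z = Wm r%:Z.
Proof.
have e : r%:Z - r%:Z = 0 * 2 by ring.
rewrite /Zm /Wm e ev_e. have -> : 0 * 2 = 0 :> int by []. rewrite gv0.
split.
- by rewrite -mulrA hiW mulr1.
- by rewrite mulrAC hiZ mul1r.
Qed.

Definition Agree (t : int) := (forall a, (a <= r)%N -> X a t = Xm a t /\ X a (t + 1) = Xm a (t + 1))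
  /\ Z t = Zm t /\ W t = Wm t.

Lemma Agree_r : Agree r%:Z.
Proof. split; first exact: match_X. exact: match_Z. Qed.

Ltac fin m := first [exact m | exact (esym m) | (rewrite [LHS]mulrC [RHS]mulrC; first [exact m | exact (esym m)])].

Lemma cancelL (x y z : R) : (exists w, x * w = 1) -> x * y = x * z -> y = z.
Proof. move=> hx h; apply: (cancelR x) => //; by rewrite mulrC h mulrC. Qed.

Lemma Agree_fwd t : Agree t -> Agree (t + 1).
Proof.
move=> [hX [hZ hW]].
have hlow : forall a, (a <= r.-1)%N -> X a (t + 1 + 1) = Xm a (t + 1 + 1).
  move=> a ha. case: a ha => [|a] ha; first by rewrite HX0 MR0.
  have e : t + 1 - 1 = t by ring.
  have h1 := H1 a.+1 (t + 1) ltac:(lia). have m1 := MR1 a.+1 (t + 1) ltac:(lia).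
  rewrite e /= in h1 m1.
  rewrite -(proj1 (hX a.+1 _)) -?(proj2 (hX a _)) -?(proj2 (hX a.+2 _)) in m1; try lia.
  rewrite -h1 in m1. apply: (cancelL (X a.+1 t)); last by fin m1.
  apply: HXinv; lia.
have hz : Z (t + 1) = Zm (t + 1).
  have h := H2 (t + 1). have m := MR2 (t + 1).
  have e : t + 1 - 1 = t by ring. rewrite e in h m.
  rewrite (proj2 (hX r _)) ?(proj2 (hX r.-1 _)) // in h; try lia.
  rewrite -h hZ in m. apply: (cancelL (Zm t)); last by fin m.
  rewrite -hZ; exact: HZinv.
have hw : W (t + 1) = Wm (t + 1).
  have h := H2w (t + 1). have m := MR2w (t + 1).
  have e : t + 1 - 1 = t by ring. rewrite e in h m.
  rewrite (proj2 (hX r _)) ?(proj2 (hX r.-1 _)) // in h; try lia.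
  rewrite -h hW in m. apply: (cancelL (Wm t)); last by fin m.
  rewrite -hW; exact: HWinv.
have htop : X r (t + 1 + 1) = Xm r (t + 1 + 1).
  have h := H3 (t + 1). have m := MR3 (t + 1).
  rewrite hz hw (proj2 (hX r _)) ?(proj2 (hX r.-1 _)) ?(hlow r.-1) // in h; try lia.
  rewrite -h in m. apply: (cancelL (Xm r (t + 1))); last by fin m.
  rewrite -(proj2 (hX r _)) //. apply: HXinv; lia.
split; last by [].
move=> a ha. split; first exact: (proj2 (hX a ha)).
case: (ltnP a r) => har; first by apply: hlow; lia.
by have -> : a = r by lia.
Qed.

Lemma Agree_bwd t : Agree (t + 1) -> Agree t.
Proof.
move=> [hX [hZ hW]].
have hz : Z t = Zm t.
  have h := H2 (t + 1). have m := MR2 (t + 1).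
  have e : t + 1 - 1 = t by ring. rewrite e in h m.
  rewrite (proj1 (hX r _)) ?(proj1 (hX r.-1 _)) // in h; try lia.
  rewrite -h hZ in m. apply: (cancelR (Zm (t + 1))); last by fin m.
  rewrite -hZ; exact: HZinv.
have hw : W t = Wm t.
  have h := H2w (t + 1). have m := MR2w (t + 1).
  have e : t + 1 - 1 = t by ring. rewrite e in h m.
  rewrite (proj1 (hX r _)) ?(proj1 (hX r.-1 _)) // in h; try lia.
  rewrite -h hW in m. apply: (cancelR (Wm (t + 1))); last by fin m.
  rewrite -hW; exact: HWinv.
have hlow : forall a, (a <= r.-1)%N -> X a t = Xm a t.
  move=> a ha. case: a ha => [|a] ha; first by rewrite HX0 MR0.
  have e : t + 1 - 1 = t by ring.
  have h1 := H1 a.+1 (t + 1) ltac:(lia). have m1 := MR1 a.+1 (t + 1) ltac:(lia).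
  rewrite e /= in h1 m1.
  rewrite -(proj2 (hX a.+1 _)) -?(proj1 (hX a _)) -?(proj1 (hX a.+2 _)) in m1; try lia.
  rewrite -h1 in m1. apply: (cancelR (X a.+1 (t + 1 + 1))); last by fin m1.
  apply: HXinv; lia.
have htop : X r t = Xm r t.
  have h := H3 t. have m := MR3 t.
  rewrite hz hw (proj1 (hX r _)) ?(proj1 (hX r.-1 _)) ?(hlow r.-1) // in h; try lia.
  rewrite -h in m. apply: (cancelR (Xm r (t + 1))); last by fin m.
  rewrite -(proj1 (hX r _)) //. apply: HXinv; lia.
split; last by [].
move=> a ha. split; last exact: (proj1 (hX a ha)).
case: (ltnP a r) => har; first by apply: hlow; lia.
by have -> : a = r by lia.
Qed.

Lemma int_ind2 (P : int -> Prop) (t0 : int) : P t0 -> (forall t, P t -> P (t + 1)) ->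
  (forall t, P (t + 1) -> P t) -> forall t, P t.
Proof.
move=> h0 hf hb.
have H : forall n : nat, P (t0 + n%:Z) /\ P (t0 - n%:Z).
  elim=> [|n [IH1 IH2]].
    by split; [have -> : t0 + 0%:Z = t0 by lia | have -> : t0 - 0%:Z = t0 by lia].
  split.
  - have -> : t0 + n.+1%:Z = (t0 + n%:Z) + 1 by lia. exact: hf.
  - apply: hb. by have -> : t0 - n.+1%:Z + 1 = t0 - n%:Z by lia.
move=> t. case: (lerP t0 t) => ht.
- have := proj1 (H (absz (t - t0))). by have -> : t0 + (absz (t - t0))%:Z = t by lia.
- have := proj2 (H (absz (t0 - t))). by have -> : t0 - (absz (t0 - t))%:Z = t by lia.
Qed.

Lemma Agree_all t : Agree t.
Proof. exact: (int_ind2 Agree r%:Z Agree_r Agree_fwd Agree_bwd). Qed.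

Lemma reduced_periodic_aux t :
  (forall a, (a <= r)%N -> X a (t + dd) = X a t) /\ Z (t + dd) = W t /\ W (t + dd) = Z t.
Proof.
have A1 := Agree_all (t + dd). have A0 := Agree_all t.
split.
- move=> a ha. rewrite (proj1 (proj1 A1 a ha)) (proj1 (proj1 A0 a ha)). exact: MPX.
- rewrite (proj1 (proj2 A1)) (proj2 (proj2 A1)) (proj1 (proj2 A0)) (proj2 (proj2 A0)).
  exact: MPZW.
Qed.
End Reduced.

Lemma reduced_periodic (R : comPzRingType) (r : nat) (X : nat -> int -> R) (Z W : int -> R) :
  (2 <= r)%N ->
  (forall t, X 0 t = 1) ->
  (forall a t, (1 <= a <= r)%N -> exists y, X a t * y = 1) ->
  (forall t, exists y, Z t * y = 1) ->
  (forall t, exists y, W t * y = 1) ->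
  (forall a t, (1 <= a <= r.-1)%N -> X a (t - 1) * X a (t + 1) = 1 + X a.-1 t * X a.+1 t) ->
  (forall t, Z (t - 1) * Z t = X r t + X r.-1 t) ->
  (forall t, W (t - 1) * W t = X r t + X r.-1 t) ->
  (forall t, X r t * X r (t + 1) = Z t * W t + X r.-1 t * X r.-1 (t + 1)) ->
  forall t, (forall a, (a <= r)%N -> X a (t + (2 * r + 1)%N%:Z) = X a t) /\
    Z (t + (2 * r + 1)%N%:Z) = W t /\ W (t + (2 * r + 1)%N%:Z) = Z t.
Proof.
move=> hr HX0 HXinv HZinv HWinv H1 H2 H2w H3 t.
have [iZ hiZ] := HZinv r%:Z. have [iW hiW] := HWinv r%:Z.
exact: (@reduced_periodic_aux R r X Z W hr HX0 HXinv HZinv HWinv H1 H2 H2w H3 iZ iW hiZ hiW t).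
Qed.

Definition XT (R : comPzRingType) (r : nat) (T : nat -> nat -> int -> R) (c : int)
  (a : nat) (t : int) : R :=
  if a == 0%N then 1 else if a == r then T r 2%N (t * 2 + c) else T a 1%N (t * 2 + c).
Definition ZT (R : comPzRingType) (r : nat) (T : nat -> nat -> int -> R) (c : int) (t : int) : R :=
  T r 1%N (t * 2 + c + 1).
Definition WT (R : comPzRingType) (r : nat) (T : nat -> nat -> int -> R) (c : int) (t : int) : R :=
  T r 3%N (t * 2 + c + 1).

Arguments XT {R}. Arguments ZT {R}. Arguments WT {R}.

Lemma red_apply (R : comPzRingType) (r : nat) (T : nat -> nat -> int -> R) :
  (2 <= r)%N -> TsysB2 r T -> forall c t,
  (forall a, (a <= r)%N -> XT r T c a (t + (2 * r + 1)%N%:Z) = XT r T c a t) /\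
  ZT r T c (t + (2 * r + 1)%N%:Z) = WT r T c t /\ WT r T c (t + (2 * r + 1)%N%:Z) = ZT r T c t.
Proof.
move=> hr [hinv [h1 [h2 [h3 [h4 h5]]]]] c.
have gr1 : is_gen r r 1%N by rewrite /is_gen; apply/orP; right; rewrite eqxx.
have gr2 : is_gen r r 2%N by rewrite /is_gen; apply/orP; right; rewrite eqxx.
have gr3 : is_gen r r 3%N by rewrite /is_gen; apply/orP; right; rewrite eqxx.
have ga : forall a, (1 <= a <= r.-1)%N -> is_gen r a 1%N.
  move=> a ha. by rewrite /is_gen ha.
have Xr : forall t, XT r T c r t = T r 2%N (t * 2 + c).
  move=> t. rewrite /XT. have -> : (r == 0%N) = false by apply/eqP; lia. by rewrite eqxx.
have Xa : forall a t, (1 <= a <= r.-1)%N -> XT r T c a t = T a 1%N (t * 2 + c).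
  move=> a t ha. rewrite /XT. have -> : (a == 0%N) = false by apply/eqP; lia.
  by have -> : (a == r) = false by apply/eqP; lia.
apply: (@reduced_periodic R r (XT r T c) (ZT r T c) (WT r T c)).
- exact: hr.
- by move=> t; rewrite /XT.
- move=> a t ha. case: (a =P r) => [->|ne]; first by rewrite Xr; apply: hinv.
  rewrite Xa; last lia. apply: hinv. apply: ga. lia.
- move=> t; exact: hinv.
- move=> t; exact: hinv.
- move=> a t ha. rewrite (Xa a (t - 1) ha) (Xa a (t + 1) ha).
  have ez : forall b, (b < r)%N -> XT r T c b t = Tz T b (t * 2 + c).
    move=> b hb. rewrite /XT /Tz. case: (b =P 0%N) => // _.
    by have -> : (b == r) = false by apply/eqP; lia.
  rewrite ez; last lia.
  have e1 : t * 2 + c - 2 = (t - 1) * 2 + c by ring.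
  have e2 : t * 2 + c + 2 = (t + 1) * 2 + c by ring.
  case: (a.+1 =P r) => [ea|ne].
  + rewrite ea Xr. have h := h2 (t * 2 + c). rewrite e1 e2 in h.
    have -> : a = r.-1 by lia. have -> : r.-1.-1 = (r - 2)%N by lia. exact: h.
  + rewrite Xa; last lia. have h := h1 a (t * 2 + c). rewrite e1 e2 in h. apply: h. lia.
- move=> t. rewrite /ZT Xr Xa; last lia.
  have h := h3 (t * 2 + c).
  have e1 : t * 2 + c - 1 = (t - 1) * 2 + c + 1 by ring.
  rewrite e1 in h. exact: h.
- move=> t. rewrite /WT Xr Xa; last lia.
  have h := h5 (t * 2 + c).
  have e1 : t * 2 + c - 1 = (t - 1) * 2 + c + 1 by ring.
  rewrite e1 in h. exact: h.
- move=> t. rewrite /ZT /WT !Xr !Xa; try lia.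
  have h := h4 (t * 2 + c + 1).
  have e1 : t * 2 + c + 1 - 1 = t * 2 + c by ring.
  have e2 : t * 2 + c + 1 + 1 = (t + 1) * 2 + c by ring.
  rewrite e1 e2 in h. exact: h.
Qed.

Theorem corollary7p14 (r : nat) (hr : (2 <= r)%N) (R : comPzRingType)
    (T : nat -> nat -> int -> R) (hT : TsysB2 r T) :
  forall (a m : nat) (k : int), is_gen r a m ->
    T a m (k + (2 * (2 * r + 1))%N%:Z) = T a (2 * tB r a - m)%N k /\
    T a m (k + (4 * (2 * r + 1))%N%:Z) = T a m k.
Proof.
have RA := @red_apply R r T hr hT.
have step : forall a m k, is_gen r a m ->
    T a m (k + (2 * (2 * r + 1))%N%:Z) = T a (2 * tB r a - m)%N k.
  move=> a m k. rewrite /is_gen /tB.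
  case/orP => [/andP [ha /eqP ->] | /andP [/eqP ea hm]].
  + have -> : (a == r) = false by apply/eqP; lia.
    have [t [ek|ek]] := parity k.
    * have := proj1 (RA 0 t) a ltac:(lia). rewrite /XT.
      have -> : (a == 0%N) = false by apply/eqP; lia.
      have -> : (a == r) = false by apply/eqP; lia.
      rewrite !addr0 ek. have -> : (t + (2 * r + 1)%N%:Z) * 2 = t * 2 + (2 * (2 * r + 1))%N%:Z by lia.
      by [].
    * have := proj1 (RA 1 t) a ltac:(lia). rewrite /XT.
      have -> : (a == 0%N) = false by apply/eqP; lia.
      have -> : (a == r) = false by apply/eqP; lia.
      rewrite ek. have -> : (t + (2 * r + 1)%N%:Z) * 2 + 1 = t * 2 + 1 + (2 * (2 * r + 1))%N%:Z by lia.
      by [].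
  + rewrite ea eqxx.
    have hm3 : m = 1%N \/ m = 2%N \/ m = 3%N by lia.
    case: hm3 => [->|[->|->]].
    * have [t [ek|ek]] := parity k.
      -- have := proj1 (proj2 (RA 1 (t - 1))). rewrite /ZT /WT.
         have -> : (t - 1 + (2 * r + 1)%N%:Z) * 2 + 1 + 1 = k + (2 * (2 * r + 1))%N%:Z by lia.
         by have -> : (t - 1) * 2 + 1 + 1 = k by lia.
      -- have := proj1 (proj2 (RA 0 t)). rewrite /ZT /WT.
         have -> : (t + (2 * r + 1)%N%:Z) * 2 + 0 + 1 = k + (2 * (2 * r + 1))%N%:Z by lia.
         by have -> : t * 2 + 0 + 1 = k by lia.
    * have [t [ek|ek]] := parity k.
      -- have := proj1 (RA 0 t) r (leqnn r). rewrite /XT.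
         have -> : (r == 0%N) = false by apply/eqP; lia. rewrite eqxx.
         have -> : (t + (2 * r + 1)%N%:Z) * 2 + 0 = k + (2 * (2 * r + 1))%N%:Z by lia.
         by have -> : t * 2 + 0 = k by lia.
      -- have := proj1 (RA 1 t) r (leqnn r). rewrite /XT.
         have -> : (r == 0%N) = false by apply/eqP; lia. rewrite eqxx.
         have -> : (t + (2 * r + 1)%N%:Z) * 2 + 1 = k + (2 * (2 * r + 1))%N%:Z by lia.
         by have -> : t * 2 + 1 = k by lia.
    * have [t [ek|ek]] := parity k.
      -- have := proj2 (proj2 (RA 1 (t - 1))). rewrite /ZT /WT.
         have -> : (t - 1 + (2 * r + 1)%N%:Z) * 2 + 1 + 1 = k + (2 * (2 * r + 1))%N%:Z by lia.
         by have -> : (t - 1) * 2 + 1 + 1 = k by lia.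
      -- have := proj2 (proj2 (RA 0 t)). rewrite /ZT /WT.
         have -> : (t + (2 * r + 1)%N%:Z) * 2 + 0 + 1 = k + (2 * (2 * r + 1))%N%:Z by lia.
         by have -> : t * 2 + 0 + 1 = k by lia.
move=> a m k hg. split; first exact: step.
have hg' : is_gen r a (2 * tB r a - m)%N.
  move: hg; rewrite /is_gen /tB.
  case/orP => [/andP [ha /eqP ->] | /andP [/eqP ea hm]].
  + have -> : (a == r) = false by apply/eqP; lia. by rewrite ha.
  + rewrite ea eqxx /=. apply/orP; right. apply/andP; split; lia.
have -> : k + (4 * (2 * r + 1))%N%:Z = (k + (2 * (2 * r + 1))%N%:Z) + (2 * (2 * r + 1))%N%:Z by lia.
rewrite step // step //.
have -> : (2 * tB r a - (2 * tB r a - m))%N = m; last by [].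
move: hg; rewrite /is_gen /tB.
case/orP => [/andP [ha /eqP ->] | /andP [/eqP ea hm]].
+ have -> : (a == r) = false by apply/eqP; lia. by [].
+ rewrite ea eqxx. lia.
Qed.
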